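(* Let $(M,\rho)$ be a metric space and $f:[a,b]\to M$. If $md(f,x)$ exists for every $x\in[a,b]$ and $x\mapsto md(f,x)$ is Lebesgue integrable on $[a,b]$, then $f$ is absolutely continuous on $[a,b]$.
   Context: $md(f,x)=\lim_{t\to0,\ x+t\in[a,b]}\rho(f(x+t),f(x))/|t|$ when it exists (finite). Absolute continuity of $f$: for every $\varepsilon>0$ there is $\delta>0$ such that for non-overlapping intervals $[a_i,b_i]\subset[a,b]$ with $\sum_i(b_i-a_i)<\delta$ one has $\sum_i\rho(f(b_i),f(a_i))<\varepsilon$. *)

(* Defs.v *)
From HB Require Import structures.
From mathcomp Require Import all_boot all_order all_algebra.
From mathcomp Require Import all_classical all_reals all_analysis.
Set Implicit Arguments. Unset Strict Implicit. Unset Printing Implicit Defensive.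
Import Order.TTheory GRing.Theory Num.Theory.
Import numFieldNormedType.Exports.
Local Open Scope classical_set_scope.
Local Open Scope ring_scope.

Definition is_metric (R : realType) (M : Type) (rho : M -> M -> R) : Prop :=
  [/\ forall x y, 0 <= rho x y,
      forall x y, rho x y = 0 <-> x = y,
      forall x y, rho x y = rho y x &
      forall x y z, rho x z <= rho x y + rho y z].

Definition md_is (R : realType) (M : Type) (rho : M -> M -> R)
  (a b : R) (f : R -> M) (x l : R) : Prop :=
  (fun t => rho (f (x + t)) (f x) / `|t|)
    @ within [set t | t != 0 /\ a <= x + t <= b] (nbhs (0 : R)) --> l.

Definition abs_cont_metric (R : realType) (M : Type) (rho : M -> M -> R)
  (a b : R) (f : R -> M) : Prop :=
  forall eps : R, 0 < eps -> exists2 delta : R, 0 < delta &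
    forall (n : nat) (ai bi : 'I_n -> R),
      (forall i, a <= ai i /\ ai i <= bi i /\ bi i <= b) ->
      (forall i j, i != j -> bi i <= ai j \/ bi j <= ai i) ->
      \sum_(i < n) (bi i - ai i) < delta ->
      \sum_(i < n) rho (f (bi i)) (f (ai i)) < eps.

(* Main.v *)
Require Import Defs.
From HB Require Import structures.
From mathcomp Require Import all_boot all_order all_algebra.
From mathcomp Require Import all_classical all_reals all_analysis.
From mathcomp Require Import ring lra measurable_realfun.
Import Order.TTheory GRing.Theory Num.Theory.
Import numFieldNormedType.Exports.
Local Open Scope classical_set_scope.
Local Open Scope ring_scope.
Set Implicit Arguments. Unset Strict Implicit.

Lemma real_ind (R : realType) (c d : R) (P : R -> Prop) :
  c <= d -> P c ->
  (forall s, c < s <= d -> (forall y, c <= y < s -> P y) -> P s) ->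
  (forall x, c <= x < d -> P x ->
     exists2 e, 0 < e & forall y, x < y < x + e -> y <= d -> P y) ->
  P d.
Proof.
move=> cd Pc H2 H3.
pose S := [set x | c <= x <= d /\ forall z, c <= z <= x -> P z].
have Sc : S c.
  split; first by rewrite lexx cd.
  by move=> z /andP[h1 h2]; have -> : z = c by apply/le_anti; rewrite h1 h2.
have hS : has_sup S.
  by split; [exists c | exists d => x [/andP[_ ->]]].
pose s := sup S.
have cs : c <= s by apply: sup_upper_bound.
have sd : s <= d by apply: ge_sup; [exists c | move=> x [/andP[_ ->]]].
have HS : forall z, c <= z < s -> P z.
  move=> z /andP[cz zs].
  have zs0 : 0 < s - z by rewrite subr_gt0.
  have [x [_ Hx] zx] := sup_adherent zs0 hS.
  by apply: Hx; rewrite cz /=; move: zx; rewrite opprB addrCA subrr addr0 => /ltW.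
have Ps : P s.
  have [<-//|cs'] := eqVneq c s.
  by apply: H2 => //; rewrite sd andbT lt_neqAle cs' cs.
have Ss : S s.
  split; first by rewrite cs sd.
  move=> z /andP[cz zs]; have [zs'|sz] := ltP z s.
    by apply: HS; rewrite cz zs'.
  by have -> : z = s by apply/le_anti; rewrite zs sz.
have [sd'|] := ltP s d; last first.
  by move=> ds; have <- : s = d by apply/le_anti; rewrite sd ds.
have [e e0 He] : exists2 e, 0 < e & forall y, s < y < s + e -> y <= d -> P y by apply: H3 Ps; rewrite cs sd'.
pose m := Num.min e (d - s).
have m0 : 0 < m by rewrite lt_min e0 subr_gt0.
have me : m <= e by rewrite /m ge_min lexx.
have mds : m <= d - s by rewrite /m ge_min lexx orbT.
pose y := s + m / 2.
have sy : s < y by rewrite /y ltrDl divr_gt0.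
have Sy : S y.
  have yd : y <= d.
    rewrite /y -lerBrDl; apply: le_trans mds.
    rewrite ler_pdivrMr //; rewrite ler_peMr ?ltW //; lra.
  split; first by rewrite yd andbT (le_trans cs) ?ltW.
  move=> z /andP[cz zy]; have [zs|sz] := leP z s.
    by apply: (Ss.2); rewrite cz zs.
  apply: He; last by apply: le_trans yd.
  rewrite sz /=; apply: (le_lt_trans zy); rewrite /y ltrD2l.
  apply: (lt_le_trans _ me).
  by rewrite ltr_pdivrMr // ltr_pMr // ltr1n.
by have := sup_upper_bound hS Sy; rewrite leNgt sy.
Qed.

Lemma md_bound (R : realType) (M : Type) (rho : M -> M -> R) (a b : R) (f : R -> M) (x l : R) :
  md_is rho a b f x l -> exists2 del, 0 < del & forall t, t != 0 -> `|t| < del ->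
    a <= x + t <= b -> rho (f (x + t)) (f x) < (l + 1) * `|t|.
Proof.
move=> /cvgr_lt /(_ (l + 1)) H.
have : l < l + 1 by rewrite ltrDl.
move=> /H; rewrite /within /= => /nbhs_ballP [del del0 Hd].
exists del => // t t0 tdel tab.
have := Hd t; rewrite /ball /= sub0r normrN => /(_ tdel) /(_ (conj t0 tab)).
by rewrite ltr_pdivrMr ?normr_gt0.
Qed.

Lemma open_right (R : realType) (O : set R) x : open O -> O x ->
  exists2 e, 0 < e & forall y, x < y < x + e -> O y.
Proof.
move=> oO Ox; have := oO x Ox => /nbhs_ballP [e e0 He].
exists e => // y /andP[xy ye]; apply: He; rewrite /ball /=.
rewrite ler0_norm ?subr_le0 ?ltW //; lra.
Qed.

Lemma common_right (R : realType) (O : nat -> set R) x N :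
  (forall n, (n < N)%N -> open (O n) /\ O n x) ->
  exists2 e, 0 < e & forall n y, (n < N)%N -> x < y < x + e -> O n y.
Proof.
elim: N => [|N IH] H; first by exists 1 => // n y.
have [e e0 He] := IH (fun n nN => H n (ltnW nN)).
have [oN ON] := H N (ltnSn N).
have [e' e'0 He'] := @open_right R (O N) x oN ON.
exists (Num.min e e'); first by rewrite lt_min e0 e'0.
move=> n y; rewrite ltnS leq_eqVlt => /orP[/eqP->|nN] /andP[xy ye].
  by apply: He'; rewrite xy /=; apply: (lt_le_trans ye); rewrite lerD2l ge_min lexx orbT.
by apply: He => //; rewrite xy /=; apply: (lt_le_trans ye); rewrite lerD2l ge_min lexx.
Qed.

Definition Ufun (R : realType) (O : nat -> set R) (c y : R) : \bar R :=
  (\sum_(0 <= n <oo) (@lebesgue_measure R) (O n `&` `]c, y]))%E.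

Lemma Ufun_ge0 (R : realType) (O : nat -> set R) c y : (0 <= Ufun O c y)%E.
Proof. by apply: nneseries_ge0 => n _ _; apply: measure_ge0. Qed.

Lemma Ufun_mono (R : realType) (O : nat -> set R) c y z : (forall n, open (O n)) ->
  y <= z -> (Ufun O c y <= Ufun O c z)%E.
Proof.
move=> oO yz; apply: lee_nneseries => [n _ _|n _]; first exact: measure_ge0.
apply: le_measure; rewrite ?inE.
- by apply: measurableI; [apply: measurable_realfun.open_measurable|apply: measurable_itv].
- by apply: measurableI; [apply: measurable_realfun.open_measurable|apply: measurable_itv].
- move=> t [Ot]; rewrite /= !in_itv /= => /andP[ct ty]; split => //.
  by rewrite ct (le_trans ty yz).
Qed.

Lemma Ufun_split (R : realType) (O : nat -> set R) c x y : (forall n, open (O n)) ->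
  c <= x -> x <= y ->
  Ufun O c y = (Ufun O c x + \sum_(0 <= n <oo) (@lebesgue_measure R) (O n `&` `]x, y]))%E.
Proof.
move=> oO cx xy; rewrite /Ufun -nneseriesD; last 2 first.
- by move=> n _ _; apply: measure_ge0.
- by move=> n _ _; apply: measure_ge0.
apply: eq_eseriesr => n _.
rewrite -measureU.
- congr (_ _); apply/seteqP; split => t /=.
    move=> [Ot]; rewrite !in_itv /= => /andP[ct ty].
    have [tx|xt] := leP t x; first by left; split => //=; rewrite ct.
    by right; split => //=.
  move=> [[Ot]|[Ot]]; rewrite !in_itv /= => /andP[h1 h2]; split => //=.
    by rewrite h1 (le_trans h2 xy).
    by rewrite (le_lt_trans cx h1) h2.
- by apply: measurableI; [apply: measurable_realfun.open_measurable|apply: measurable_itv].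
- by apply: measurableI; [apply: measurable_realfun.open_measurable|apply: measurable_itv].
- apply/seteqP; split => t //= [[_]]; rewrite !in_itv /= => /andP[_ tx] [_].
  by move=> /andP[xt _]; move: (lt_le_trans xt tx); rewrite ltxx.
Qed.

Lemma key (R : realType) (M : Type) (rho : M -> M -> R) (a b : R) (f : R -> M)
  (mdf : R -> R) (O : nat -> set R) :
  is_metric rho ->
  (forall x, a <= x <= b -> md_is rho a b f x (mdf x)) ->
  (forall n, open (O n)) ->
  (forall n x, a <= x <= b -> n%:R < mdf x -> O n x) ->
  forall c d, a <= c -> c <= d -> d <= b ->
  ((rho (f d) (f c) - 2 * (d - c))%:E <= Ufun O c d)%E.
Proof.
move=> [r0 r00 rsym rtri] md oO AO c d ac cd db.
apply: (@real_ind R c d (fun y => ((rho (f y) (f c) - 2 * (y - c))%:E <= Ufun O c y)%E)) => //.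
- have -> : rho (f c) (f c) = 0 by apply/r00.
  by rewrite subrr mulr0 subr0 Ufun_ge0.
- move=> s /andP[cs sd] HP; apply/lee_addgt0Pr => e e0.
  have /md_bound [del del0 Hd] : md_is rho a b f s (mdf s).
    by apply: md; rewrite (le_trans ac (ltW cs)) (le_trans sd db).
  pose K := `|mdf s| + 1.
  have K0 : 0 < K by rewrite /K ltr_pwDr.
  pose r := Num.min (del / 2) (e / (2 * K)).
  have r0' : 0 < r by rewrite lt_min !divr_gt0 // mulr_gt0.
  have rdel : r <= del / 2 by rewrite /r ge_min lexx.
  have re : r <= e / (2 * K) by rewrite /r ge_min lexx orbT.
  have Kr : K * r <= e / 2.
    have -> : e / 2 = K * (e / (2 * K)) by field; rewrite gt_eqF.
    by apply: ler_wpM2l => //; exact: ltW.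
  pose y := Num.max c (s - r).
  have cy : c <= y by rewrite /y le_max lexx.
  have sry : s - r <= y by rewrite /y le_max lexx orbT.
  have ys : y < s by rewrite /y gt_max cs ltrBlDr ltrDl.
  have := Hd (y - s); rewrite (addrC s) subrK.
  have ys0 : y - s != 0 by rewrite subr_eq0 lt_eqF.
  have hn : `|y - s| = s - y by rewrite ltr0_norm ?subr_lt0 // opprB.
  rewrite hn => /(_ ys0).
  have : s - y < del by lra.
  move=> h /(_ h); rewrite (le_trans ac cy) (le_trans (ltW ys) (le_trans sd db)) /=.
  move=> /(_ isT) hr.
  have hr2 : rho (f y) (f s) <= e / 2.
    apply: (le_trans (ltW hr)); apply: le_trans Kr.
    apply: le_trans (_ : K * (s - y) <= _).
      by apply: ler_wpM2r; [lra | rewrite /K lerD2r ler_norm].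
    by apply: ler_wpM2l; [exact: ltW | lra].
  apply: (@le_trans _ _ ((rho (f y) (f c) - 2 * (y - c) + e)%:E)).
    rewrite lee_fin.
    have := rtri (f s) (f y) (f c); rewrite (rsym (f s) (f y)); lra.
  rewrite EFinD; apply: leeD => //.
  apply: le_trans (HP y _) (Ufun_mono c oO (ltW ys)).
  by rewrite cy ys.
- move=> x /andP[cx xd] Px.
  have xab : a <= x <= b by rewrite (le_trans ac cx) (le_trans (ltW xd) db).
  have /md_bound [del del0 Hd] := md x xab.
  pose N := Num.truncn (mdf x).
  have hN : mdf x < N%:R + 1 by rewrite natr1; exact: truncnS_gt.
  have [e2 e20 He2] : exists2 e, 0 < e & forall n y, (n < N)%N -> x < y < x + e -> O n y.
    apply: common_right => n nN; split => //; apply: AO => //.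
    by move: nN; rewrite truncn_gt_nat => h; apply: lt_le_trans h; rewrite ltr_nat.
  exists (Num.min e2 del); first by rewrite lt_min e20 del0.
  move=> y /andP[xy ye] yd.
  have ye2 : y < x + e2.
    by apply: (lt_le_trans ye); rewrite lerD2l ge_min lexx.
  have ydel : y < x + del.
    by apply: (lt_le_trans ye); rewrite lerD2l ge_min lexx orbT.
  have := Hd (y - x); rewrite (addrC x) subrK.
  have yx0 : y - x != 0 by rewrite subr_eq0 gt_eqF.
  have hn : `|y - x| = y - x by rewrite gtr0_norm // subr_gt0.
  rewrite hn => /(_ yx0); have h : y - x < del by lra.
  move=> /(_ h); rewrite (le_trans ac (le_trans cx (ltW xy))) (le_trans yd db) /=.
  move=> /(_ isT) hr.
  rewrite (Ufun_split oO cx (ltW xy)).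
  have HS : ((N%:R * (y - x))%:E <=
      \sum_(0 <= n <oo) (@lebesgue_measure R) (O n `&` `]x, y]))%E.
    apply: le_trans (@nneseries_lim_ge _ _ _ 0 N _); last by move=> n _ _; apply: measure_ge0.
    rewrite (@eq_big_nat _ _ _ 0 N _ (fun _ => (y - x)%:E)).
      by rewrite sumEFin sumr_const_nat subn0 mulr_natl.
    move=> n /andP[_ nN]; rewrite setIidr; last first.
      move=> t /=; rewrite in_itv /= => /andP[xt ty]; apply: He2 nN _.
      by rewrite xt (le_lt_trans ty ye2).
    by rewrite lebesgue_measure_itv /= lte_fin xy -EFinB.
  apply: (@le_trans _ _ ((rho (f x) (f c) - 2 * (x - c) + N%:R * (y - x))%:E)).
    rewrite lee_fin.
    have h1 : (mdf x + 1) * (y - x) <= (N%:R + 2) * (y - x).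
      by apply: ler_wpM2r; lra.
    have := rtri (f y) (f x) (f c); lra.
  by rewrite EFinD; apply: leeD.
Qed.

Definition Aset (R : realType) (a b : R) (h : R -> R) (n : nat) : set R :=
  `[a, b] `&` h @^-1` `]n%:R, +oo[.

Lemma ind_sum_le (R : realType) (h : R -> R) (A : nat -> set R)
  (HA : forall n x, A n x -> n%:R < h x) x :
  (\sum_(0 <= n <oo) (\1_(A n) x)%:E <= (`|h x| + 1)%:E)%E.
Proof.
pose K := Num.truncn `|h x|.
rewrite (@nneseries_split _ _ 0 K.+1); last by move=> k _; rewrite lee_fin.
rewrite add0n eseries0 ?adde0; last first.
  move=> k Kk _; rewrite indicE; case: (boolP (x \in A k)) => [/set_mem Ak|//].
  exfalso; have := HA _ _ Ak.
  have : `|h x| < K.+1%:R by exact: truncnS_gt.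
  have : K.+1%:R <= k%:R :> R by rewrite ler_nat.
  have := ler_norm (h x); lra.
rewrite sumEFin lee_fin.
apply: le_trans (_ : \sum_(0 <= k < K.+1) (1 : R) <= _).
  by apply: ler_sum => k _; rewrite indicE; case: (_ \in _) => /=; lra.
rewrite sumr_const_nat subn0 -natr1 lerD2r.
by rewrite truncn_le.
Qed.

Lemma layer (R : realType) (a b : R) (h : R -> R) :
  (@lebesgue_measure R).-integrable `[a, b] (EFin \o h) ->
  (\sum_(0 <= n <oo) (@lebesgue_measure R) (Aset a b h n) < +oo)%E.
Proof.
move=> hi; have hia := integrable_abse hi.
move/integrableP: (hi) => [mEh hfin].
move/integrableP: hia => [mabs _].
have mh : measurable_fun `[a, b] h by apply/measurable_EFinP.
have mA n : measurable (Aset a b h n).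
  exact: (mh (measurable_itv _) _ (measurable_itv _)).
have -> : (\sum_(0 <= n <oo) (@lebesgue_measure R) (Aset a b h n) =
    \sum_(0 <= n <oo) \int[@lebesgue_measure R]_(x in `[a, b]) (\1_(Aset a b h n) x)%:E)%E.
  apply: eq_eseriesr => n _; rewrite integral_indic; [|exact: (measurable_itv `[a, b])|exact: mA].
  by rewrite setIidl //; move=> x [].
rewrite -integral_nneseries; last 3 first.
- exact: (measurable_itv `[a, b]).
- by move=> n; apply/measurable_EFinP; apply: measurable_indic; exact: mA.
- by move=> n x _; rewrite lee_fin.
apply: (@le_lt_trans _ _ (\int[@lebesgue_measure R]_(x in `[a, b]) (`|(h x)%:E| + 1%:E))%E).
  apply: ge0_le_integral.
  - exact: (measurable_itv `[a, b]).
  - by move=> x _; apply: nneseries_ge0 => n _ _; rewrite lee_fin.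
  - apply: ge0_emeasurable_sum.
      by move=> k x _ _; rewrite lee_fin.
    by move=> k _; apply/measurable_EFinP; apply: measurable_indic; exact: mA.
  - by apply: emeasurable_funD => //; apply: measurable_cst.
  - move=> x _; rewrite abse_EFin -EFinD; apply: ind_sum_le.
    by move=> n t [_]; rewrite /= in_itv /= andbT.
rewrite ge0_integralD; last 5 first.
- exact: (measurable_itv `[a, b]).
- by move=> x _; apply: abse_ge0.
- by [].
- by move=> x _; rewrite lee_fin.
- exact: measurable_cst.
rewrite lte_add_pinfty //.
rewrite integral_cst; last exact: (measurable_itv `[a, b]).
rewrite mul1e; change ((@lebesgue_measure R) [set` `[a, b]] < +oo)%E.
by rewrite lebesgue_measure_itv; case: ifP => _ //; rewrite ltry.
Qed.

Lemma disj_sum (R : realType) n (ai bi : 'I_n -> R) (B : set R) :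
  measurable B ->
  (forall i j, i != j -> bi i <= ai j \/ bi j <= ai i) ->
  (\sum_(i < n) (@lebesgue_measure R) (B `&` `]ai i, bi i]) <= (@lebesgue_measure R) B)%E.
Proof.
move=> mB Hd.
have mF i : measurable (B `&` `]ai i, bi i]).
  by apply: measurableI => //; exact: measurable_itv.
rewrite -measure_bigsetU_ord //.
- apply: le_measure; rewrite ?inE.
  + by apply: bigsetU_measurable => i _; exact: mF.
  + by [].
  + move=> x; rewrite -bigcup_seq => -[i _ []] //.
- move=> i j _ _ [x [[_ xi] [_ xj]]].
  apply/eqP; apply: contraT => ij.
  move: xi xj; rewrite /= !in_itv /= => /andP[h1 h2] /andP[h3 h4].
  case: (Hd i j ij) => h; lra.
Qed.

Lemma tail_small (R : realType) (u : nat -> \bar R) (e : R) :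
  (forall n, (0 <= u n)%E) -> (\sum_(0 <= n <oo) u n < +oo)%E -> 0 < e ->
  exists K, (\sum_(K <= n <oo) u n < e%:E)%E.
Proof.
move=> u0 ufin e0.
have := nneseries_tail_cvg ufin (fun k _ => u0 k).
move=> /fine_cvgP [finev /cvgr_lt /(_ e e0) ltev].
have : \forall K \near \oo, (\sum_(K <= n <oo) u n < e%:E)%E.
  near=> K.
  have /fineK <- : (\sum_(K <= n <oo) u n)%E \is a fin_num by near: K.
  by rewrite lte_fin; near: K.
by move=> [N _ HN]; exists N; apply: HN => /=.
Unshelve. all: by end_near.
Qed.

Unset Implicit Arguments. Set Strict Implicit.

Theorem theorem3p8 (R : realType) (M : Type) (rho : M -> M -> R)
  (a b : R) (f : R -> M) :
  is_metric rho ->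
  (* md(f,x) exists for every x in [a,b]; mdf x denotes md(f,x) *)
  forall mdf : R -> R,
  (forall x, a <= x <= b -> md_is rho a b f x (mdf x)) ->
  (* x |-> md(f,x) is Lebesgue integrable on [a,b] *)
  (@lebesgue_measure R).-integrable `[a, b] (EFin \o mdf) ->
  abs_cont_metric rho a b f.
Proof.
move=> metric mdf md hi eps eps0.
move/integrableP: (hi) => [mEh _].
have mh : measurable_fun `[a, b] mdf by apply/measurable_EFinP.
pose A := Aset a b mdf.
have mA n : measurable (A n).
  exact: (mh (measurable_itv _) _ (measurable_itv _)).
have Afin n : ((@lebesgue_measure R) (A n) < +oo)%E.
  apply: (@le_lt_trans _ _ ((@lebesgue_measure R) `[a, b])).
    apply: le_measure; rewrite ?inE; [exact: mA | exact: measurable_itv | by move=> x []].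
  by rewrite lebesgue_measure_itv; case: ifP => _ //; rewrite ltry.
pose e4 := eps / 4.
have e40 : 0 < e4 by rewrite divr_gt0.
have en0 n : 0 < e4 / (2 ^ n.+1)%:R by rewrite divr_gt0 // ltr0n expn_gt0.
have [Op HO] := choice (fun n => lebesgue_regularity_outer (mA n) (Afin n) (en0 n)).
have oO n : open (Op n) by case: (HO n).
have AO n x : a <= x <= b -> n%:R < mdf x -> Op n x.
  move=> xab nx; case: (HO n) => _ + _; apply; split => //=.
  by rewrite in_itv /= nx.
have [K HK] := tail_small (fun n => measure_ge0 (@lebesgue_measure R) (A n)) (layer hi) e40.
pose del := eps / (4 * (K%:R + 2)).
have del0 : 0 < del by rewrite divr_gt0 // mulr_gt0 // ltr_wpDl.
exists del => // n ai bi Hab Hdisj Hlen.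
pose L := \sum_(i < n) (bi i - ai i).
pose I := fun i => [set` `]ai i, bi i]] : set R.
have mI i : measurable (I i) by exact: measurable_itv.
have S1 : ((\sum_(i < n) (rho (f (bi i)) (f (ai i)) - 2 * (bi i - ai i)))%:E <=
    \sum_(i < n) Ufun Op (ai i) (bi i))%E.
  rewrite -sumEFin; apply: lee_sum => i _.
  by have [h1 [h2 h3]] := Hab i; exact: (key metric md oO AO h1 h2 h3).
have S2 : (\sum_(i < n) Ufun Op (ai i) (bi i) =
    \sum_(0 <= m <oo) \sum_(i < n) (@lebesgue_measure R) (Op m `&` I i))%E.
  by rewrite /Ufun nneseries_sum // => i j _; exact: measure_ge0.
pose a_ m := (\sum_(i < n) (@lebesgue_measure R) (A m `&` I i))%E.
have a0 m : (0 <= a_ m)%E by apply: sume_ge0 => i _; exact: measure_ge0.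
have S3 : (\sum_(0 <= m <oo) \sum_(i < n) (@lebesgue_measure R) (Op m `&` I i) <=
    \sum_(0 <= m <oo) a_ m + e4%:E)%E.
  apply: le_trans (epsilon_trick _ _ _); last 2 first.
  - by move=> m; exact: a0.
  - exact: ltW.
  apply: lee_nneseries => [m _ _|m _].
    by apply: sume_ge0 => i _; exact: measure_ge0.
  case: (HO m) => om Aom Hm.
  have mO : measurable (Op m) by exact: open_measurable.
  apply: (@le_trans _ _ (a_ m + (@lebesgue_measure R) (Op m `\` A m))%E); last first.
    by apply: leeD => //; exact: ltW.
  apply: (@le_trans _ _ (\sum_(i < n) ((@lebesgue_measure R) (A m `&` I i) +
      (@lebesgue_measure R) ((Op m `\` A m) `&` I i)))%E).
    apply: lee_sum => i _.
    apply: le_trans (measureU2 _ _ _); last 2 first.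
    - by apply: measurableI; [exact: mA|exact: mI].
    - by apply: measurableI; [(apply: measurableD; [exact: mO|exact: (mA m)])|exact: mI].
    apply: le_measure; rewrite ?inE.
    - by apply: measurableI; [exact: mO|exact: mI].
    - apply: measurableU; apply: measurableI; try exact: mI; try exact: mA.
      by (apply: measurableD; [exact: mO|exact: (mA m)]).
    - move=> x [Ox Ix]; have [Ax|nAx] := pselect (A m x).
        by left.
      by right.
  rewrite big_split /=; apply: leeD => //.
  by apply: disj_sum => //; apply: measurableD.
have S4 : (\sum_(0 <= m <oo) a_ m <= (K%:R * L)%:E + e4%:E)%E.
  rewrite (@nneseries_split _ _ 0 K); last by move=> m _; exact: a0.
  rewrite add0n; apply: leeD.
    apply: (@le_trans _ _ (\sum_(0 <= m < K) L%:E)%E).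
      apply: lee_sum => m _; rewrite /a_ /L -sumEFin; apply: lee_sum => i _.
      apply: (@le_trans _ _ ((@lebesgue_measure R) (I i))).
        apply: le_measure; rewrite ?inE; [by apply: measurableI; [exact: mA|exact: mI]|exact: mI|by move=> x []].
      rewrite /I lebesgue_measure_itv /=; case: ifP => _; first by rewrite -EFinB.
      by rewrite lee_fin subr_ge0; have [_ [? _]] := Hab i.
    by rewrite sumEFin sumr_const_nat subn0 mulr_natl.
  apply: le_trans (ltW HK); apply: lee_nneseries => [m _ _|m _]; first exact: a0.
  exact: disj_sum.
have X : (\sum_(i < n) (rho (f (bi i)) (f (ai i)) - 2 * (bi i - ai i)) <= K%:R * L + e4 + e4).
  rewrite -lee_fin !EFinD -EFinD.
  apply: le_trans S1 _; rewrite S2; apply: le_trans S3 _.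
  by rewrite !EFinD; apply: leeD => //; rewrite -EFinD; exact: S4.
move: X; rewrite sumrB -mulr_sumr -/L => X.
have KL : K%:R * L <= K%:R * del by apply: ler_wpM2l => //; exact: ltW.
have hd : K%:R * del + 2 * del = e4 by rewrite /del /e4; field. Show.
rewrite /e4 in hd X. have Hl : L < del := Hlen. set S := \sum_(i < n) rho (f (bi i)) (f (ai i)) in X *. clearbody L. lra.
Qed.
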